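(* Let $J\subseteq[n]$ and let $w,w'\in W$ satisfy $W_Jw=W_Jw'$. Then for every $i\in\{0,1,\dots,n\}$ we have $W_J\,\sigma_i(w)=W_J\,\sigma_i(w')$.
   Context: Let $\Phi$ be an irreducible (crystallographic) root system of rank $n$ with simple roots $\alpha_1,\dots,\alpha_n$, and let $\alpha_0$ be the highest root with respect to this simple system. For $i\in\{0,\dots,n\}$ let $t_i$ be the reflection in the hyperplane orthogonal to $\alpha_i$. The Weyl group $W$ is generated by $t_1,\dots,t_n$, and $\ell$ is the length function with respect to $t_1,\dots,t_n$. For $w\in W$ and $1\le i\le n$, $\sigma_i(w)=w$ if $\ell(wt_i)>\ell(w)$ and $\sigma_i(w)=wt_i$ otherwise; $\sigma_0(w)=w$ if $\ell(wt_0)<\ell(w)$ and $\sigma_0(w)=wt_0$ otherwise. For $J\subseteq[n]$ (so $0\notin J$), $W_J$ is the subgroup of $W$ generated by $\{t_j:j\in J\}$, and $W_Jw$ denotes a right coset. *)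

(* Defs.v *)
From mathcomp Require Import all_boot all_order all_algebra.
From Stdlib Require Import ClassicalEpsilon.
Set Implicit Arguments. Unset Strict Implicit. Unset Printing Implicit Defensive.
Import Order.TTheory GRing.Theory Num.Theory.
Local Open Scope ring_scope.

Section RootSystems.
Variables (R : realFieldType) (n : nat).

Definition dot (u v : 'cV[R]_n) : R := (u^T *m v) 0 0.

(* Matrix of the orthogonal reflection in the hyperplane orthogonal to a:
   v |-> v - (2 (v,a)/(a,a)) a, acting by M *m v (so products of matrices
   are compositions of maps). *)
Definition refl_mx (a : 'cV[R]_n) : 'M[R]_n :=
  1%:M - (2 / dot a a) *: (a *m a^T).

Definition root_system (Phi : seq 'cV[R]_n) : Prop :=
  [/\ 0 \notin Phi,
      (forall v : 'cV[R]_n, exists c : 'I_(size Phi) -> R,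
          v = \sum_(k < size Phi) c k *: Phi`_k),
      (forall a b, a \in Phi -> b \in Phi -> refl_mx a *m b \in Phi),
      (forall a b, a \in Phi -> b \in Phi ->
          exists z : int, 2 * dot a b / dot a a = z%:~R)
    & (forall a (c : R), a \in Phi -> c *: a \in Phi -> c = 1 \/ c = -1)].

Definition irreducible_rs (Phi : seq 'cV[R]_n) : Prop :=
  ~ exists P : pred 'cV[R]_n,
      [/\ exists2 a, a \in Phi & P a,
          exists2 a, a \in Phi & ~~ P a
        & forall a b, a \in Phi -> b \in Phi -> P a -> ~~ P b -> dot a b = 0].

Definition simple_system (Phi : seq 'cV[R]_n) (simple : 'I_n -> 'cV[R]_n) : Prop :=
  [/\ forall j, simple j \in Phi,
      (forall c : 'I_n -> R, \sum_j c j *: simple j = 0 -> forall j, c j = 0)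
    & forall b, b \in Phi -> exists c : 'I_n -> int,
        ((forall j, 0 <= c j) \/ (forall j, c j <= 0)) /\
        b = \sum_j (c j)%:~R *: simple j].

Definition highest_root (Phi : seq 'cV[R]_n) (simple : 'I_n -> 'cV[R]_n)
    (a0 : 'cV[R]_n) : Prop :=
  a0 \in Phi /\ forall b, b \in Phi -> exists c : 'I_n -> int,
      (forall j, 0 <= c j) /\ a0 - b = \sum_j (c j)%:~R *: simple j.

(* Indices {0,...,n} are 'I_n.+1; alpha ord0 is the highest root and
   alpha i (i <> 0) are the simple roots; t i is the reflection in alpha i. *)
Variable alpha : 'I_n.+1 -> 'cV[R]_n.

Definition t (i : 'I_n.+1) : 'M[R]_n := refl_mx (alpha i).

Definition wprod (s : seq 'I_n.+1) : 'M[R]_n :=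
  foldr (fun i acc => t i *m acc) 1%:M s.

Definition nonzero_word (s : seq 'I_n.+1) : bool := all (fun i => i != ord0) s.

(* Weyl group W = < t_1, ..., t_n > (the t_i are involutions, so the
   monoid generated equals the group generated). *)
Definition inW (w : 'M[R]_n) : Prop :=
  exists s, nonzero_word s /\ wprod s = w.

(* Length with respect to t_1, ..., t_n (0 outside W, never used there). *)
Definition has_word_of_size (w : 'M[R]_n) : pred nat :=
  fun k => [exists s : k.-tuple 'I_n.+1, nonzero_word s && (wprod s == w)].

Definition ell (w : 'M[R]_n) : nat :=
  match excluded_middle_informative (exists k, has_word_of_size w k) with
  | left h => ex_minn h
  | right _ => 0%N
  end.

Definition sigma (i : 'I_n.+1) (w : 'M[R]_n) : 'M[R]_n :=
  if i == ord0 then (if (ell (w *m t i) < ell w)%N then w else w *m t i)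
  else (if (ell w < ell (w *m t i))%N then w else w *m t i).

Definition inWJ (J : {set 'I_n.+1}) (u : 'M[R]_n) : Prop :=
  exists s, all (fun i => i \in J) s /\ wprod s = u.

Definition rcosetJ (J : {set 'I_n.+1}) (w : 'M[R]_n) : 'M[R]_n -> Prop :=
  fun M => exists2 u, inWJ J u & M = u *m w.

Definition same_rcoset (J : {set 'I_n.+1}) (w w' : 'M[R]_n) : Prop :=
  forall M, rcosetJ J w M <-> rcosetJ J w' M.

End RootSystems.

(* Main.v *)
Require Import Defs.
From mathcomp Require Import all_boot all_order all_algebra.
From mathcomp Require Import zify.
From Stdlib Require Import ClassicalEpsilon.
Import Order.TTheory GRing.Theory Num.Theory.
Local Open Scope ring_scope.
Set Implicit Arguments. Unset Strict Implicit. Unset Printing Implicit Defensive.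

Section Mx.
Variables (R : realFieldType) (n : nat).
Implicit Types (a b u v : 'cV[R]_n) (M : 'M[R]_n).

Lemma dotE u v : dot u v = \sum_k u k 0 * v k 0.
Proof. by rewrite /dot !mxE; apply: eq_bigr => k _; rewrite mxE. Qed.

Lemma dotC u v : dot u v = dot v u.
Proof. by rewrite !dotE; apply: eq_bigr => k _; rewrite mulrC. Qed.

Lemma dot_ge0 a : 0 <= dot a a.
Proof. by rewrite dotE; apply: sumr_ge0 => k _; rewrite -expr2 sqr_ge0. Qed.

Lemma dot_eq0 a : dot a a = 0 -> a = 0.
Proof.
rewrite dotE => /eqP; rewrite psumr_eq0 => [/allP H|k _]; last by rewrite -expr2 sqr_ge0.
apply/matrixP => i j; rewrite (ord1 j) mxE.
have := H i (mem_index_enum _); rewrite /= -expr2 sqrf_eq0 => /eqP //.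
Qed.

Lemma mulmx_tr u v : u^T *m v = (dot u v)%:M.
Proof. by rewrite {1}[u^T *m v]mx11_scalar. Qed.

Lemma reflE a b : refl_mx a *m b = b - (2 * dot a b / dot a a) *: a.
Proof.
rewrite /refl_mx mulmxBl mul1mx -scalemxAl -mulmxA mulmx_tr mul_mx_scalar scalerA.
by rewrite mulrAC.
Qed.

Lemma refl_tr a : (refl_mx a)^T = refl_mx a.
Proof. by rewrite /refl_mx linearB /= trmx1 linearZ /= trmx_mul trmxK. Qed.

Lemma PP a : (a *m a^T) *m (a *m a^T) = dot a a *: (a *m a^T).
Proof. by rewrite mulmxA -(mulmxA a) mulmx_tr mul_mx_scalar scalemxAl. Qed.

Lemma refl_invol a : dot a a != 0 -> refl_mx a *m refl_mx a = 1%:M.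
Proof.
move=> H; rewrite /refl_mx mulmxBl mul1mx mulmxBr mulmx1 -scalemxAl -scalemxAr.
rewrite PP !scalerA -mulrA.
have -> : 2 / dot a a * (2 / dot a a * dot a a) = 2 / dot a a + 2 / dot a a.
  by rewrite mulfVK // -mulr2n mulr_natr.
by rewrite scalerDl opprB addrK subrK.
Qed.
Lemma dot_mx M u v : M^T *m M = 1%:M -> dot (M *m u) (M *m v) = dot u v.
Proof. by move=> H; rewrite /dot trmx_mul mulmxA -(mulmxA u^T) H mulmx1. Qed.

Lemma refl_conj M b : M^T *m M = 1%:M -> M *m M^T = 1%:M ->
  M *m refl_mx b *m M^T = refl_mx (M *m b).
Proof.
move=> H1 H2; rewrite /refl_mx dot_mx // mulmxBr mulmx1 mulmxBl H2.
by rewrite -scalemxAr -scalemxAl trmx_mul !mulmxA.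
Qed.

Lemma reflN b : refl_mx (- b) = refl_mx b.
Proof. rewrite /refl_mx /dot !linearN /= !mulNmx scalerN opprK. have -> : forall X : 'M[R]_1, (- - X) = X by move=> X; rewrite opprK. by []. Qed.

Lemma refl_self a : dot a a != 0 -> refl_mx a *m a = - a.
Proof. by move=> H; rewrite reflE mulfK // scaler_nat mulr2n opprD addrA subrr sub0r. Qed.
Lemma dot_sum (I : finType) (x : I -> R) (v : I -> 'cV[R]_n) u :
  dot (\sum_k x k *: v k) u = \sum_k x k * dot (v k) u.
Proof.
rewrite dotE (eq_bigr (fun i => \sum_k x k * v k i 0 * u i 0)); last first.
  by move=> i _; rewrite summxE mulr_suml; apply: eq_bigr => k _; rewrite mxE.
rewrite exchange_big /=; apply: eq_bigr => k _.
by rewrite dotE mulr_sumr; apply: eq_bigr => i _; rewrite mulrA.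
Qed.

End Mx.

Section Roots.
Variables (R : realFieldType) (n : nat) (Phi : seq 'cV[R]_n) (alpha : 'I_n.+1 -> 'cV[R]_n).
Local Notation a := (fun j : 'I_n => alpha (lift ord0 j)).
Hypothesis HR : root_system Phi.
Hypothesis HS : simple_system Phi a.
Hypothesis HH : highest_root Phi a (alpha ord0).

Definition pos (b : 'cV[R]_n) := exists c : 'I_n -> int,
  (forall j, 0 <= c j) /\ b = \sum_j (c j)%:~R *: a j.

Lemma alpha_Phi i : alpha i \in Phi.
Proof. case: (unliftP ord0 i) => [j ->|->]; [by case: HS | by case: HH]. Qed.

Lemma Phi_nz b : b \in Phi -> b != 0.
Proof. by case: HR => H0 _ _ _ _ Hb; apply: contraNneq H0 => <-. Qed.

Lemma Phi_dot b : b \in Phi -> dot b b != 0.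
Proof. by move=> /Phi_nz; apply: contraNneq => /dot_eq0 ->. Qed.

Lemma t_Phi i b : b \in Phi -> t alpha i *m b \in Phi.
Proof. by case: HR => _ _ H _ _ Hb; apply: H => //; apply: alpha_Phi. Qed.

Lemma wprod_Phi s b : b \in Phi -> wprod alpha s *m b \in Phi.
Proof. by elim: s => [|i s IH] Hb /=; [rewrite mul1mx | rewrite -mulmxA t_Phi // IH]. Qed.

Lemma wprod_cat s1 s2 : wprod alpha (s1 ++ s2) = wprod alpha s1 *m wprod alpha s2.
Proof. by elim: s1 => [|i s IH] /=; rewrite ?mul1mx // IH mulmxA. Qed.

Lemma t_tr i : (t alpha i)^T = t alpha i.
Proof. exact: refl_tr. Qed.

Lemma t_invol i : t alpha i *m t alpha i = 1%:M.
Proof. by apply: refl_invol; apply: Phi_dot; apply: alpha_Phi. Qed.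

Lemma wprod_tr s : (wprod alpha s)^T = wprod alpha (rev s).
Proof.
elim: s => [|i s IH] /=; first by rewrite trmx1.
by rewrite trmx_mul IH t_tr rev_cons -cats1 wprod_cat /= mulmx1.
Qed.

Lemma wprod_orth s : (wprod alpha s)^T *m wprod alpha s = 1%:M
                  /\ wprod alpha s *m (wprod alpha s)^T = 1%:M.
Proof.
elim: s => [|i s [IH1 IH2]] /=; first by rewrite trmx1 mulmx1.
rewrite trmx_mul t_tr; split.
  by rewrite mulmxA -(mulmxA (wprod alpha s)^T) t_invol mulmx1.
by rewrite mulmxA -(mulmxA (t alpha i)) IH2 mulmx1 t_invol.
Qed.

Lemma coef_uniq (c d : 'I_n -> R) :
  \sum_j c j *: a j = \sum_j d j *: a j -> forall j, c j = d j.
Proof.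
move=> E j; case: HS => _ Hind _; apply/eqP; rewrite -subr_eq0; apply/eqP.
apply: (Hind (fun j => c j - d j)).
by rewrite (eq_bigr (fun j => c j *: a j - d j *: a j)) ?sumrB ?E ?subrr // => k _; rewrite scalerBl.
Qed.

Lemma sign_total b : b \in Phi -> pos b \/ pos (- b).
Proof.
case: HS => _ _ H /H [c [[Hc|Hc] ->]]; [left; by exists c|right; exists (fun j => - c j)].
split=> [j|]; first by rewrite oppr_ge0.
by rewrite -sumrN; apply: eq_bigr => j _; rewrite -scaleNr mulrNz.
Qed.

Lemma sign_excl b : b \in Phi -> pos b -> pos (- b) -> False.
Proof.
move=> Hb [c [Hc Ec]] [d [Hd Ed]].
have E : \sum_j ((c j)%:~R : R) *: a j = \sum_j (- (d j)%:~R) *: a j.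
  by rewrite -Ec (eq_bigr (fun j => - ((d j)%:~R *: a j))) ?sumrN -?Ed ?opprK // => j _; rewrite scaleNr.
have Hz j : c j = 0.
  have := coef_uniq E j => /eqP; rewrite -mulrNz eqr_int => /eqP Ej.
  by apply/eqP; rewrite eq_le Hc andbT Ej oppr_le0.
move/Phi_nz: Hb; rewrite Ec big1 ?eqxx // => j _; by rewrite Hz scale0r.
Qed.

Lemma sum_delta (m : R) j : \sum_k ((k == j)%:R * m) *: a k = m *: a j.
Proof.
rewrite (bigD1 j) //= eqxx mul1r big1 ?addr0 // => k /negbTE ->.
by rewrite mul0r scale0r.
Qed.

Lemma step (c : 'I_n -> R) j (g : 'cV[R]_n) : g = \sum_k c k *: a k ->
  t alpha (lift ord0 j) *m g =
  \sum_k (c k - (k == j)%:R * (2 * dot (a j) g / dot (a j) (a j))) *: a k.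
Proof.
move=> Eg; rewrite /t reflE.
rewrite (eq_bigr (fun k => c k *: a k - ((k == j)%:R * (2 * dot (a j) g / dot (a j) (a j))) *: a k)).
  by rewrite sumrB sum_delta -Eg.
by move=> k _; rewrite scalerBl.
Qed.

Lemma pos_simple j : pos (a j).
Proof.
exists (fun k => (k == j)%:Z); split=> [k|]; first by case: (k == j).
rewrite (eq_bigr (fun k => ((k == j)%:R * 1) *: a k)) ?sum_delta ?scale1r //.
by move=> k _; rewrite mulr1; case: (k == j).
Qed.

Lemma pos_step j b : b \in Phi -> pos b -> b != a j ->
  pos (t alpha (lift ord0 j) *m b).
Proof.
move=> Hb [c [Hc Eb]] Hne.
have Eb' : b = \sum_k ((c k)%:~R : R) *: a k by [].
have Htb := t_Phi (lift ord0 j) Hb.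
case: (boolP [exists k, (k != j) && (0 < c k)]) => [/existsP [k /andP [Hkj Hck]]|].
  case: (sign_total Htb) => // [[e [He Ee]]]; exfalso.
  have E2 : t alpha (lift ord0 j) *m b = \sum_k (- (e k)%:~R : R) *: a k.
    by rewrite -[LHS]opprK Ee -sumrN; apply: eq_bigr => l _; rewrite scaleNr.
  have := coef_uniq (etrans (esym (step j Eb')) E2) k.
  rewrite (negbTE Hkj) mul0r subr0 => /eqP; rewrite -mulrNz eqr_int => /eqP Ek.
  by move: Hck; rewrite Ek oppr_gt0 ltNge He.
rewrite negb_exists => /forallP Hall.
have Hz k : k != j -> c k = 0.
  move=> Hkj; have := Hall k; rewrite Hkj /= -leNgt => Hle.
  by apply/eqP; rewrite eq_le Hle Hc.
have Ebj : b = (c j)%:~R *: a j.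
  rewrite Eb (bigD1 j) //= big1 ?addr0 // => k Hk; by rewrite Hz // scale0r.
case: HR => _ _ _ _ Hred.
have := Hred (a j) (c j)%:~R (alpha_Phi _); rewrite -Ebj => /(_ Hb) [H1|Hm1].
  by move: Hne; rewrite Ebj H1 scale1r eqxx.
by move: (Hc j); rewrite -(ler0z R) Hm1 ler0N1.
Qed.

Lemma Phi_N b : b \in Phi -> - b \in Phi.
Proof.
move=> Hb; case: HR => _ _ H _ _; have := H b b Hb Hb.
by rewrite refl_self // Phi_dot.
Qed.

Lemma pos_alpha i : pos (alpha i).
Proof.
case: (unliftP ord0 i) => [j ->|->]; first exact: pos_simple.
case: (sign_total (alpha_Phi ord0)) => // -[d [Hd Ed]].
case: HH => H0 Hh; case: (Hh _ (Phi_N (alpha_Phi ord0))) => c [Hc Ec].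
have E : \sum_k ((c k)%:~R : R) *: a k = \sum_k (- ((d k + d k)%:~R)) *: a k.
  rewrite -Ec opprK -[alpha ord0]opprK Ed -opprD -big_split /= -sumrN.
  by apply: eq_bigr => k _; rewrite -scalerDl -scaleNr intrD.
have Hz k : d k = 0.
  have := coef_uniq E k => /eqP; rewrite -mulrNz eqr_int => /eqP Ek.
  have := Hc k; have := Hd k; rewrite Ek; lia.
move/Phi_nz: H0; rewrite -oppr_eq0 Ed big1 ?eqxx // => k _.
by rewrite Hz scale0r.
Qed.


Lemma refl_word (P : pred 'I_n.+1) N : forall b (c : 'I_n -> int),
  b \in Phi -> (forall k, 0 <= c k) -> b = \sum_k (c k)%:~R *: a k ->
  (forall k, ~~ P (lift ord0 k) -> c k = 0) -> \sum_k c k < N%:Z ->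
  exists s, all P s /\ wprod alpha s = refl_mx b.
Proof.
elim: N => [|N IH] b c Hb Hc Eb Hsupp Hsum.
  by move: Hsum; rewrite ltNge sumr_ge0.
have Hpos : 0 < dot b b by rewrite lt_def Phi_dot // dot_ge0.
have [j /andP [Hcj Hdj]] : exists j, (0 < c j) && (0 < dot (a j) b).
  apply/existsP; apply: contraTT Hpos => /existsPn Hn.
  rewrite -leNgt {1}Eb dot_sum; apply: sumr_le0 => k _.
  have := Hn k; rewrite negb_and -!leNgt => /orP [Hk|Hk].
    have -> : c k = 0 by apply/eqP; rewrite eq_le Hk Hc.
    by rewrite mul0r.
  by rewrite mulr_ge0_le0 // ler0z.
have HPj : P (lift ord0 j).
  by apply: contraTT Hcj => /Hsupp ->.
case: (eqVneq b (a j)) => [->|Hne].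
  by exists [:: lift ord0 j]; rewrite /= HPj mulmx1.
have Hb' := t_Phi (lift ord0 j) Hb.
have [e [He Ee]] := pos_step Hb (ex_intro _ c (conj Hc Eb)) Hne.
case: HR => _ _ _ Hint _.
have [z Ez] := Hint _ _ (alpha_Phi (lift ord0 j)) Hb.
have Hz : 0 < z.
  rewrite -(ltr0z R) -Ez; apply: divr_gt0; first by rewrite mulr_gt0.
  by rewrite lt_def Phi_dot ?alpha_Phi // dot_ge0.
have Eb2 : b = \sum_k ((c k)%:~R : R) *: a k by [].
have := step j Eb2; rewrite Ez Ee => E.
have Hek k : e k = c k - (if k == j then z else 0).
  have := coef_uniq E k; case: (k == j); rewrite ?mul1r ?mul0r ?subr0 -?intrB.
    by move/eqP; rewrite eqr_int => /eqP.
  by move/eqP; rewrite eqr_int => /eqP.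
have [s [Hs Es]] : exists s, all P s /\ wprod alpha s = refl_mx (t alpha (lift ord0 j) *m b).
  apply: (IH _ e Hb' He Ee).
    move=> k Hk; rewrite Hek Hsupp //; case: eqP => // Ekj.
    by move: Hk; rewrite Ekj HPj.
  have -> : \sum_k e k = \sum_k c k - z.
    rewrite (eq_bigr _ (fun k _ => Hek k)) sumrB; congr (_ - _).
    by rewrite (bigD1 j) //= eqxx big1 ?addr0 // => k /negbTE ->.
  move: Hsum; rewrite -addn1 PoszD; lia.
exists (lift ord0 j :: s ++ [:: lift ord0 j]); split.
  by rewrite /= HPj all_cat Hs /= HPj.
rewrite /= wprod_cat Es /= mulmx1 -refl_conj ?t_tr ?t_invol //.
by rewrite !mulmxA t_invol mul1mx -mulmxA t_invol mulmx1.
Qed.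

Lemma exchange s b : nonzero_word s -> b \in Phi -> pos b ->
  pos (- (wprod alpha s *m b)) ->
  exists s', [/\ nonzero_word s', (size s' < size s)%N &
                 wprod alpha s' = wprod alpha s *m refl_mx b].
Proof.
move=> + Hb Hpb; elim: s => [|i s IH] /=.
  by rewrite mul1mx => _ Hn; case: (sign_excl Hb Hpb Hn).
move=> /andP [Hi Hs]; rewrite -mulmxA => Hneg.
have Hg := wprod_Phi s Hb.
case: (sign_total Hg) => [Hpg|Hng].
  case: (unliftP ord0 i) Hi Hneg => [j ->|->]; last by rewrite eqxx.
  move=> _ Hneg; case: (eqVneq (wprod alpha s *m b) (a j)) => [Eg|Hne].
    exists s; split => //.
    have [O1 O2] := wprod_orth s.
    have Et : t alpha (lift ord0 j) = wprod alpha s *m refl_mx b *m (wprod alpha s)^T.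
      by rewrite refl_conj // Eg.
    rewrite Et -!mulmxA (mulmxA _ (wprod alpha s)) O1 mul1mx.
    by rewrite refl_invol ?mulmx1 // Phi_dot.
  have := pos_step Hg Hpg Hne => Hp.
  by case: (sign_excl (t_Phi _ Hg) Hp Hneg).
have [s' [Hs' Hsz Es']] := IH Hs Hng.
by exists (i :: s'); split => //=; [rewrite Hi | rewrite Es' mulmxA].
Qed.

Lemma ell_le M s : nonzero_word s -> wprod alpha s = M -> (ell alpha M <= size s)%N.
Proof.
move=> Hs Es; rewrite /ell; case: excluded_middle_informative => [h|hn].
  case: ex_minnP => m _ Hmin; apply: Hmin.
  by apply/existsP; exists (in_tuple s); rewrite /= Hs Es eqxx.
exfalso; apply: hn; exists (size s).
by apply/existsP; exists (in_tuple s); rewrite /= Hs Es eqxx.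
Qed.

Lemma ell_word M : inW alpha M ->
  exists s, [/\ nonzero_word s, size s = ell alpha M & wprod alpha s = M].
Proof.
move=> [s0 [Hs0 Es0]]; rewrite /ell; case: excluded_middle_informative => [h|hn].
  case: ex_minnP => m /existsP [st /andP [Hst /eqP Est]] _.
  by exists st; rewrite size_tuple.
exfalso; apply: hn; exists (size s0).
by apply/existsP; exists (in_tuple s0); rewrite /= Hs0 Es0 eqxx.
Qed.

Lemma len_neg w b : inW alpha w -> b \in Phi -> pos b ->
  pos (- (w *m b)) -> (ell alpha (w *m refl_mx b) < ell alpha w)%N.
Proof.
move=> Hw Hb Hpb Hn; have [s [Hs Hsz Es]] := ell_word Hw.
rewrite -Es in Hn; have [s' [Hs' Hsz' Es']] := exchange Hs Hb Hpb Hn.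
by apply: leq_ltn_trans (ell_le Hs' _) _; rewrite ?Es' ?Es // -Hsz.
Qed.

Lemma len_pos w b : inW alpha w -> b \in Phi -> pos b ->
  (exists s, nonzero_word s /\ wprod alpha s = refl_mx b) ->
  pos (w *m b) -> (ell alpha w < ell alpha (w *m refl_mx b))%N.
Proof.
move=> [sw [Hsw Esw]] Hb Hpb [sb [Hsb Esb]] Hp.
have Hw' : inW alpha (w *m refl_mx b).
  exists (sw ++ sb); split; first by rewrite /nonzero_word all_cat; apply/andP.
  by rewrite wprod_cat Esw Esb.
have := len_neg Hw' Hb Hpb.
rewrite -[w *m refl_mx b *m refl_mx b]mulmxA refl_invol ?Phi_dot // mulmx1 -[w *m refl_mx b *m b]mulmxA refl_self ?Phi_dot //.
by rewrite mulmxN opprK; apply.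
Qed.

Lemma t_word i : exists s, nonzero_word s /\ wprod alpha s = t alpha i.
Proof.
have [c [Hc Ec]] := pos_alpha i.
apply: (@refl_word (fun i => i != ord0) (absz (\sum_k c k)).+1 _ c (alpha_Phi i) Hc Ec).
  by move=> k; rewrite eq_sym neq_lift.
have : 0 <= \sum_k c k by apply: sumr_ge0.
lia.
Qed.

Lemma sig_pos w i : inW alpha w -> pos (w *m alpha i) ->
  sigma alpha i w = if i == ord0 then w *m t alpha i else w.
Proof.
move=> Hw Hp; have H := len_pos Hw (alpha_Phi i) (pos_alpha i) (t_word i) Hp.
by rewrite /sigma /t; case: (i == ord0); rewrite ?H // ltnNge ltnW.
Qed.

Lemma sig_neg w i : inW alpha w -> pos (- (w *m alpha i)) ->
  sigma alpha i w = if i == ord0 then w else w *m t alpha i.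
Proof.
move=> Hw Hp; have H := len_neg Hw (alpha_Phi i) (pos_alpha i) Hp.
by rewrite /sigma /t; case: (i == ord0); rewrite ?H // ltnNge ltnW.
Qed.

Lemma coef_J (J : {set 'I_n.+1}) sv (c : 'I_n -> R) g :
  ord0 \notin J -> all (fun i => i \in J) sv -> g = \sum_k c k *: a k ->
  exists d : 'I_n -> R, wprod alpha sv *m g = \sum_k d k *: a k /\
    forall k, lift ord0 k \notin J -> d k = c k.
Proof.
move=> H0 + Eg; elim: sv => [|i sv IH] /=.
  by move=> _; exists c; rewrite mul1mx.
move=> /andP [Hi Hsv]; have [d [Ed Hd]] := IH Hsv.
case: (unliftP ord0 i) Hi => [j ->|->] Hj; last by rewrite Hj in H0.
rewrite -mulmxA (step j Ed).
eexists; split; first by [].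
move=> k Hk /=; rewrite Hd //; case: eqP => [Ekj|]; last by rewrite mul0r subr0.
by move: Hk; rewrite Ekj Hj.
Qed.

Lemma mixedg (J : {set 'I_n.+1}) sv g : ord0 \notin J -> all (fun i => i \in J) sv ->
  g \in Phi -> pos g -> pos (- (wprod alpha sv *m g)) ->
  exists s, all (fun i => i \in J) s /\ wprod alpha s = refl_mx g.
Proof.
move=> H0 Hsv Hg [c [Hc Ec]] [e [He Ee]].
have [d [Ed Hd]] := coef_J H0 Hsv Ec.
have Hsupp k : lift ord0 k \notin J -> c k = 0.
  move=> Hk; have E : \sum_k d k *: a k = \sum_k (- (e k)%:~R) *: a k.
    by rewrite -Ed -[LHS]opprK Ee -sumrN; apply: eq_bigr => l _; rewrite scaleNr.
  have := coef_uniq E k; rewrite Hd // -mulrNz => /eqP; rewrite eqr_int => /eqP Ek.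
  have := Hc k; have := He k; rewrite Ek; lia.
apply: (@refl_word (fun i => i \in J) (absz (\sum_k c k)).+1 _ c Hg Hc Ec Hsupp).
have : 0 <= \sum_k c k by apply: sumr_ge0.
lia.
Qed.

Lemma rc_of (J : {set 'I_n.+1}) x y u : inWJ alpha J u -> y = u *m x ->
  same_rcoset alpha J x y.
Proof.
move=> [su [Hsu Eu]] Ey M; split.
  move=> [u' [su' [Hsu' Eu']] ->]; exists (u' *m (wprod alpha (rev su))).
    by exists (su' ++ rev su); rewrite wprod_cat Eu' all_cat Hsu' all_rev Hsu.
  rewrite Ey -wprod_tr -Eu mulmxA -(mulmxA u') (proj1 (wprod_orth su)) mulmx1.
  by [].
move=> [u' [su' [Hsu' Eu']] ->]; exists (u' *m u).
  by exists (su' ++ su); rewrite wprod_cat Eu' Eu all_cat Hsu' Hsu.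
by rewrite Ey mulmxA.
Qed.

Lemma main_sec (J : {set 'I_n.+1}) (w w' : 'M[R]_n) :
  ord0 \notin J -> inW alpha w -> inW alpha w' ->
  same_rcoset alpha J w w' -> forall i : 'I_n.+1,
  same_rcoset alpha J (sigma alpha i w) (sigma alpha i w').
Proof.
move=> H0 Hw Hw' Hrc i.
have [v Hv Ew'] : rcosetJ alpha J w w'.
  by apply/Hrc; exists 1%:M; [exists [::] | rewrite mul1mx].
have [sw [Hsw Esw]] := Hw.
have [sw' [Hsw' Esw']] := Hw'.
have [O1 O2] := wprod_orth sw; rewrite Esw in O1 O2.
have Hg : w *m alpha i \in Phi by rewrite -Esw wprod_Phi ?alpha_Phi.
have Eg' : w' *m alpha i = v *m (w *m alpha i) by rewrite Ew' mulmxA.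
have Hvg : v *m (w *m alpha i) \in Phi by rewrite -Eg' -Esw' wprod_Phi ?alpha_Phi.
have [sv [Hsv Esv]] := Hv.
have F1 : w *m t alpha i *m w^T *m w = w *m t alpha i by rewrite -mulmxA O1 mulmx1.
have F2 : w *m t alpha i *m w^T *m (w *m t alpha i) = w.
  by rewrite mulmxA F1 -mulmxA t_invol mulmx1.
have Eu0 : w *m t alpha i *m w^T = refl_mx (w *m alpha i) by rewrite /t refl_conj.
have Hmix : pos (w *m alpha i) /\ pos (- (v *m (w *m alpha i))) \/
            pos (- (w *m alpha i)) /\ pos (v *m (w *m alpha i)) ->
  inWJ alpha J (v *m (w *m t alpha i *m w^T)).
  move=> Hc; have [s0 [Hs0 Es0]] : exists s, all (fun i => i \in J) s /\
       wprod alpha s = refl_mx (w *m alpha i).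
    case: Hc => [[Hp Hn]|[Hn Hp]].
      by apply: (mixedg H0 Hsv Hg Hp); rewrite Esv.
    rewrite -reflN; apply: (mixedg H0 Hsv (Phi_N Hg) Hn).
    by rewrite Esv mulmxN opprK.
  exists (sv ++ s0); split; first by rewrite all_cat Hsv Hs0.
  by rewrite wprod_cat Esv Es0 Eu0.
case: (sign_total Hg) => Hs1; case: (sign_total Hvg) => Hs2.
- rewrite (sig_pos Hw Hs1) (sig_pos Hw' _) ?Eg' //.
  apply: (rc_of (u := v)) => //; case: (i == ord0) => //.
  by rewrite Ew' mulmxA.
- have Hu := Hmix (or_introl (conj Hs1 Hs2)).
  rewrite (sig_pos Hw Hs1) (sig_neg Hw' _) ?Eg' //.
  case: (i == ord0); apply: (rc_of Hu).
    by rewrite -mulmxA F2.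
  by rewrite Ew' -[v *m _ *m w]mulmxA F1 mulmxA.
- have Hu := Hmix (or_intror (conj Hs1 Hs2)).
  rewrite (sig_neg Hw Hs1) (sig_pos Hw' _) ?Eg' //.
  case: (i == ord0); apply: (rc_of Hu).
    by rewrite Ew' -[v *m _ *m w]mulmxA F1 mulmxA.
  by rewrite -mulmxA F2.
- rewrite (sig_neg Hw Hs1) (sig_neg Hw' _) ?Eg' //.
  apply: (rc_of (u := v)) => //; case: (i == ord0) => //.
  by rewrite Ew' mulmxA.
Qed.

End Roots.

Theorem proposition5 (R : realFieldType) (n : nat) (Phi : seq 'cV[R]_n)
    (alpha : 'I_n.+1 -> 'cV[R]_n) :
  root_system Phi -> irreducible_rs Phi ->
  simple_system Phi (fun j : 'I_n => alpha (lift ord0 j)) ->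
  highest_root Phi (fun j : 'I_n => alpha (lift ord0 j)) (alpha ord0) ->
  forall (J : {set 'I_n.+1}) (w w' : 'M[R]_n),
    ord0 \notin J -> inW alpha w -> inW alpha w' ->
    same_rcoset alpha J w w' ->
    forall i : 'I_n.+1,
      same_rcoset alpha J (sigma alpha i w) (sigma alpha i w').
Proof. by move=> HR _ HS HH; apply: (main_sec HR HS HH). Qed.
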